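(* Let $(X,\|\cdot\|)$ be a normed linear space, let $I$ be a non-trivial admissible ideal in $\mathbb{N}$, let $x=\{x_k\}_{k\in\mathbb{N}}$ be a sequence in $X$ and let $r>0$. Then $\operatorname{diam}(I\text{-}st\text{-}\mathrm{LIM}_x^r)\le 2r$. In particular, if $x$ is $I$-statistically convergent to $\xi\in X$, then $I\text{-}st\text{-}\mathrm{LIM}_x^r\supset \overline{B_r(\xi)}=\{y\in X:\|y-\xi\|\le r\}$, and so $\operatorname{diam}(I\text{-}st\text{-}\mathrm{LIM}_x^r)=2r$.
   Context: An ideal $I$ in $\mathbb{N}$ is a family of subsets of $\mathbb{N}$ containing $\emptyset$, closed under finite unions and under taking subsets; it is non-trivial if $\mathbb{N}\notin I$ and admissible if $\{n\}\in I$ for every $n\in\mathbb{N}$. A sequence $x=\{x_k\}$ in $X$ is $I$-statistically convergent to $\xi$ if for every $\varepsilon>0$ and $\delta>0$, $\{n\in\mathbb{N}:\frac1n|\{k\le n:\|x_k-\xi\|\ge\varepsilon\}|\ge\delta\}\in I$. For $r\ge 0$, $x$ is rough $I$-statistically convergent (or $r$-$I$-statistically convergent) to $\xi$ if for every $\varepsilon>0$ and $\delta>0$, $\{n\in\mathbb{N}:\frac1n|\{k\le n:\|x_k-\xi\|\ge r+\varepsilon\}|\ge\delta\}\in I$. $I\text{-}st\text{-}\mathrm{LIM}_x^r$ denotes the set of all $\xi\in X$ to which $x$ is $r$-$I$-statistically convergent. *)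

(* Defs.v *)
From HB Require Import structures.
From mathcomp Require Import all_boot all_order all_algebra.
From mathcomp Require Import all_classical all_reals all_analysis.
Set Implicit Arguments. Unset Strict Implicit. Unset Printing Implicit Defensive.
Import Order.TTheory GRing.Theory Num.Theory.
Import numFieldNormedType.Exports.
Local Open Scope classical_set_scope.
Local Open Scope ring_scope.

Definition is_ideal (I : set (set nat)) : Prop :=
  [/\ I set0,
      (forall A B, I A -> I B -> I (A `|` B)) &
      (forall A B, B `<=` A -> I A -> I B)].

Definition nontrivial_ideal (I : set (set nat)) : Prop := ~ I setT.

Definition admissible_ideal (I : set (set nat)) : Prop :=
  forall n : nat, I [set n].

(* Paper's N = {1,2,...} is identified with nat via n' = n.+1 (and k' = k.+1):
   the paper's (1/n') |{k' <= n' : P}| becomes (1/(n+1)) #|{k < n+1 : P}|. *)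
Definition st_dens {R : realType} (P : nat -> bool) (n : nat) : R :=
  (#|[set k : 'I_n.+1 | P k]|)%:R / (n.+1)%:R.

Definition rough_I_st_conv {R : realType} {X : normedModType R}
  (I : set (set nat)) (x : nat -> X) (r : R) (xi : X) : Prop :=
  forall eps delta : R, 0 < eps -> 0 < delta ->
    I [set n | delta <= st_dens (fun k => r + eps <= `|x k - xi|) n].

Definition I_st_conv {R : realType} {X : normedModType R}
  (I : set (set nat)) (x : nat -> X) (xi : X) : Prop :=
  forall eps delta : R, 0 < eps -> 0 < delta ->
    I [set n | delta <= st_dens (fun k => eps <= `|x k - xi|) n].

Definition I_st_LIM {R : realType} {X : normedModType R}
  (I : set (set nat)) (x : nat -> X) (r : R) : set X :=
  [set xi | rough_I_st_conv I x r xi].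

(* diameter, as an extended real (sup of distances; -oo for the empty set) *)
Definition diam {R : realType} {X : normedModType R} (A : set X) : \bar R :=
  ereal_sup [set (`|y - z|)%:E | y in A & z in A].

(* Main.v *)
Require Import Defs.
From HB Require Import structures.
From mathcomp Require Import all_boot all_order all_algebra.
From mathcomp Require Import all_classical all_reals all_analysis.
From mathcomp Require Import ring lra.
Import Order.TTheory GRing.Theory Num.Theory.
Import numFieldNormedType.Exports.
Local Open Scope classical_set_scope.
Local Open Scope ring_scope.

Lemma card_cs n (P : nat -> bool) : #|[set k : 'I_n.+1 | P k]| = #|[pred k : 'I_n.+1 | P k]|.
Proof. apply: eq_card => k /=. apply/idP/idP; rewrite in_setE //. Qed.

Lemma card_cs2 n (P : nat -> bool) : #|[set k : 'I_n.+1 | P k]| = #|finset [pred k : 'I_n.+1 | P k]|.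
Proof. apply: eq_card => k /=. rewrite inE. apply/idP/idP; rewrite in_setE //. Qed.

Lemma dens_mono (R : realType) (P Q : nat -> bool) n :
  (forall k, P k -> Q k) -> st_dens (R:=R) P n <= st_dens (R:=R) Q n.
Proof.
move=> PQ; rewrite /st_dens ler_wpM2r // ?invr_ge0 // ler_nat !card_cs.
apply: subset_leq_card; apply/fintype.subsetP => k; rewrite !inE; exact: PQ.
Qed.

Lemma dens_union (R : realType) (P Q : nat -> bool) n :
  (forall k, P k || Q k) -> 1 <= st_dens (R:=R) P n + st_dens (R:=R) Q n.
Proof.
move=> PQ; rewrite /st_dens -mulrDl ler_pdivlMr ?ltr0Sn // mul1r -natrD ler_nat !card_cs2.
have e : (n.+1 <= #|(finset [pred k : 'I_n.+1 | P k]) :|: (finset [pred k : 'I_n.+1 | Q k])|)%N.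
  rewrite -[X in (X <= _)%N]card_ord.
  apply: subset_leq_card; apply/fintype.subsetP => k _; rewrite !inE; exact: PQ.
case: (leq_card_setU (finset [pred k : 'I_n.+1 | P k]) (finset [pred k : 'I_n.+1 | Q k])) => h _.
exact: leq_trans e h.
Qed.

Lemma two_pts (R : realType) (X : normedModType R)
  (I : set (set nat)) (x : nat -> X) (r : R) y z :
  is_ideal I -> nontrivial_ideal I ->
  rough_I_st_conv I x r y -> rough_I_st_conv I x r z -> `|y - z| <= 2 * r.
Proof.
move=> [_ IU _] NT Hy Hz; rewrite leNgt; apply/negP => lt.
set eps := (`|y - z| - 2 * r) / 2.
have eps0 : 0 < eps by rewrite divr_gt0 // subr_gt0.
have e2 : `|y - z| = 2 * r + 2 * eps by rewrite /eps; field.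
apply: NT.
have h2 : 0 < 1 / 2 :> R by lra.
have := IU _ _ (Hy eps (1/2) eps0 h2) (Hz eps (1/2) eps0 h2).
congr I; apply/seteqP; split => // n _ /=.
have H1 := @dens_union R (fun k => r + eps <= `|x k - y|) (fun k => r + eps <= `|x k - z|) n.
have : 1 <= st_dens (R:=R) (fun k => r + eps <= `|x k - y|) n +
            st_dens (R:=R) (fun k => r + eps <= `|x k - z|) n.
  apply: H1 => k; apply/negPn/negP; rewrite negb_or -!ltNge => /andP[a b].
  have := ler_distD (x k) y z; rewrite e2 (distrC y (x k)); lra.
set a := st_dens _ n; set b := st_dens _ n => hab.
have [ha|ha] := lerP (1/2) a; [by left|right; lra].
Qed.

Theorem theorem3p1 (R : realType) (X : normedModType R)
  (I : set (set nat)) (x : nat -> X) (r : R) :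
  is_ideal I -> nontrivial_ideal I -> admissible_ideal I -> 0 < r ->
  (diam (I_st_LIM I x r) <= (2 * r)%:E)%E /\
  (forall xi : X, I_st_conv I x xi ->
     [set y : X | `|y - xi| <= r] `<=` I_st_LIM I x r /\
     ((exists v : X, v != 0) -> diam (I_st_LIM I x r) = (2 * r)%:E)).
Proof.
move=> Iid NT _ r0.
have part1 : (diam (I_st_LIM I x r) <= (2 * r)%:E)%E.
  apply: ge_ereal_sup => _ [y Hy [z Hz <-]].
  rewrite lee_fin; exact: two_pts Iid NT Hy Hz.
split => // xi Hxi.
have ball : [set y : X | `|y - xi| <= r] `<=` I_st_LIM I x r.
  move=> y /= hy eps delta e0 d0.
  case: Iid => _ _ IS.
  apply: IS (Hxi eps delta e0 d0) => n /= h.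
  apply: le_trans h _; apply: dens_mono => k hk.
  have := ler_distD xi (x k) y; rewrite (distrC xi y); lra.
split => // -[v v0].
apply/le_anti; rewrite part1 /=.
have nv : 0 < `|v| by rewrite normr_gt0.
set u := (r / `|v|) *: v.
have nu : `|u| = r.
  rewrite /u normrZ ger0_norm ?divr_ge0 ?ltW // -mulrA mulVf ?mulr1 //.
  by rewrite gt_eqF.
apply: ereal_sup_ubound; exists (xi + u).
  apply: ball; rewrite /= addrC addKr nu //.
exists (xi - u).
  apply: ball; rewrite /= addrAC subrr add0r normrN nu //.
congr (_%:E); rewrite opprB addrC addrA subrK -mulr2n normrMn nu -mulr_natl.
by rewrite mulr1 mulr_natl.
Qed.
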